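(* For $\varepsilon\ge0$ let $\psi_\varepsilon(a,b)=a+b-\sqrt{a^2+b^2+2\varepsilon^2}$, $\Psi_\varepsilon(y,z)=(\psi_\varepsilon(y_1,z_1),\dots,\psi_\varepsilon(y_p,z_p))$ for $y,z\in\mathbb R^p$, and $\Theta(\varepsilon)=\{(y,z)\in\mathbb R^p\times\mathbb R^p:\Psi_\varepsilon(y,z)=0\}$. Then $\lim_{\varepsilon\searrow0}\Theta(\varepsilon)=\Theta(0)$ in the sense of Painlevé–Kuratowski set convergence, where $\Theta(0)=\{(y,z):0\le y\perp z\ge0\}$.
   Context: Painlevé–Kuratowski convergence means $\limsup_{\varepsilon\searrow0}\Theta(\varepsilon)\subset\Theta(0)\subset\liminf_{\varepsilon\searrow0}\Theta(\varepsilon)$ (outer and inner limits of sets). *)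

(* Defs.v *)
From HB Require Import structures.
From mathcomp Require Import all_boot all_order all_algebra.
From mathcomp Require Import all_classical all_reals all_analysis.
Set Implicit Arguments. Unset Strict Implicit. Unset Printing Implicit Defensive.
Import Order.TTheory GRing.Theory Num.Theory.
Import numFieldNormedType.Exports.
Local Open Scope classical_set_scope.
Local Open Scope ring_scope.

Definition outer_limit0 (R : realType) (T : topologicalType) (S : R -> set T) : set T :=
  [set x | exists (e : nat -> R) (u : nat -> T),
     [/\ (forall k, 0 < e k), e @ \oo --> 0, (forall k, S (e k) (u k)) & u @ \oo --> x]].

Definition inner_limit0 (R : realType) (T : topologicalType) (S : R -> set T) : set T :=
  [set x | forall e : nat -> R, (forall k, 0 < e k) -> e @ \oo --> 0 ->
     exists u : nat -> T, (\forall k \near \oo, S (e k) (u k)) /\ u @ \oo --> x].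

Definition PK_converges0 (R : realType) (T : topologicalType) (S : R -> set T) (A : set T) : Prop :=
  outer_limit0 S `<=` A /\ A `<=` inner_limit0 S.

Definition psi (R : realType) (eps a b : R) : R :=
  a + b - Num.sqrt (a ^+ 2 + b ^+ 2 + 2 * eps ^+ 2).

Definition Theta (R : realType) (p : nat) (eps : R) : set ('rV[R]_p * 'rV[R]_p) :=
  [set yz : 'rV[R]_p * 'rV[R]_p | forall i : 'I_p, psi eps (yz.1 ord0 i) (yz.2 ord0 i) = 0].

Definition compl_set (R : realType) (p : nat) : set ('rV[R]_p * 'rV[R]_p) :=
  [set yz : 'rV[R]_p * 'rV[R]_p | (forall i, 0 <= yz.1 ord0 i) /\ (forall i, 0 <= yz.2 ord0 i) /\
            \sum_(i < p) yz.1 ord0 i * yz.2 ord0 i = 0].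

(* Main.v *)
Require Import Defs.
From HB Require Import structures.
From mathcomp Require Import all_boot all_order all_algebra.
From mathcomp Require Import all_classical all_reals all_analysis.
From mathcomp Require Import ring lra.
Import Order.TTheory GRing.Theory Num.Theory.
Import numFieldNormedType.Exports.
Local Open Scope classical_set_scope.
Local Open Scope ring_scope.

Lemma psi0 (R : realType) (eps a b : R) :
  psi eps a b = 0 <-> [/\ 0 <= a, 0 <= b & a * b = eps ^+ 2].
Proof.
rewrite /psi; split.
- move/eqP; rewrite subr_eq0 => /eqP H.
  have s : 0 <= a + b by rewrite H sqrtr_ge0.
  have X0 : 0 <= a ^+ 2 + b ^+ 2 + 2 * eps ^+ 2.
    by rewrite !addr_ge0 ?sqr_ge0 // mulr_ge0 // sqr_ge0.
  have H2 : (a + b) ^+ 2 = a ^+ 2 + b ^+ 2 + 2 * eps ^+ 2.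
    by rewrite H sqr_sqrtr.
  have E : (a + b) ^+ 2 = a ^+ 2 + b ^+ 2 + 2 * (a * b) by ring.
  have ab2 : 2 * (a * b) = 2 * eps ^+ 2.
    by apply: (addrI (a ^+ 2 + b ^+ 2)); rewrite -E H2.
  have ab : a * b = eps ^+ 2.
    by apply: (mulfI _ ab2); rewrite pnatr_eq0.
  have e2 : 0 <= eps ^+ 2 by rewrite sqr_ge0.
  have a0 : 0 <= a.
    rewrite leNgt; apply/negP => an.
    have bp : 0 < b by lra.
    have : a * b < 0 by rewrite pmulr_llt0.
    lra.
  have b0 : 0 <= b.
    rewrite leNgt; apply/negP => bn.
    have ap : 0 < a by lra.
    have : a * b < 0 by rewrite pmulr_rlt0.
    lra.
  by split.
- case=> a0 b0 ab.
  have -> : a ^+ 2 + b ^+ 2 + 2 * eps ^+ 2 = (a + b) ^+ 2 by rewrite -ab; ring.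
  by rewrite sqrtr_sqr ger0_norm ?subrr // addr_ge0.
Qed.

Definition tfun {R : realType} (s ee : R) := (Num.sqrt (s ^+ 2 + 4 * ee ^+ 2) - s) / 2.

Lemma tfun_prop (R : realType) (a b ee : R) :
  0 <= a -> 0 <= b -> a * b = 0 -> 0 <= ee ->
  [/\ 0 <= tfun (a + b) ee, tfun (a + b) ee <= ee &
      psi ee (a + tfun (a + b) ee) (b + tfun (a + b) ee) = 0].
Proof.
move=> a0 b0 ab ee0.
set s := a + b; have s0 : 0 <= s by rewrite addr_ge0.
set D := Num.sqrt (s ^+ 2 + 4 * ee ^+ 2).
have X0 : 0 <= s ^+ 2 + 4 * ee ^+ 2 by rewrite addr_ge0 ?sqr_ge0 // mulr_ge0 // sqr_ge0.
have D2 : D ^+ 2 = s ^+ 2 + 4 * ee ^+ 2 by rewrite sqr_sqrtr.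
have Ds : s <= D.
  have : Num.sqrt (s ^+ 2) <= D.
    by apply: ler_wsqrtr; rewrite lerDl mulr_ge0 // sqr_ge0.
  by rewrite sqrtr_sqr ger0_norm.
have Du : D <= s + 2 * ee.
  have : D <= Num.sqrt ((s + 2 * ee) ^+ 2).
    apply: ler_wsqrtr.
    have -> : (s + 2 * ee) ^+ 2 = s ^+ 2 + 4 * ee ^+ 2 + 4 * (s * ee) by ring.
    by rewrite lerDl mulr_ge0 // mulr_ge0.
  by rewrite sqrtr_sqr ger0_norm // addr_ge0 // mulr_ge0.
rewrite /tfun -/D.
split; [lra|lra|].
apply/psi0; split; [lra|lra|].
have -> : (a + (D - s) / 2) * (b + (D - s) / 2) = a * b + (D ^+ 2 - s ^+ 2) / 4.
  by rewrite /s; field.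
by rewrite ab D2; field.
Qed.

Theorem lemma4p2 (R : realType) (p : nat) :
  @Theta R p 0 = @compl_set R p /\ PK_converges0 (@Theta R p) (@Theta R p 0).
Proof.
have T0 : @Theta R p 0 = @compl_set R p.
  apply/seteqP; split => -[y z] /=.
  - move=> H; have H' (i : 'I_p) := (iffLR (psi0 _ _ _ _) (H i)).
    split; [move=> i; by case: (H' i)|split; [move=> i; by case: (H' i)|]].
    by apply: big1 => i _; case: (H' i) => _ _ ->; rewrite expr0n.
  - case=> y0 [z0 s0] i; apply/psi0; split => //.
    rewrite expr0n /=; apply: (psumr_eq0P _ s0) => // j _.
    exact: mulr_ge0.
split => //; split.
- move=> [y z] [e [u [e0 ecv uS ucv]]] i; apply/psi0.
  pose a := fun k => (u k).1 ord0 i; pose b := fun k => (u k).2 ord0 i.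
  have ha : a @ \oo --> y ord0 i.
    have h1 : (fun k => (u k).1) @ \oo --> y.
      exact: (cvg_comp _ _ ucv cvg_fst).
    exact: (cvg_comp _ _ h1 (@coord_continuous R 1 p ord0 i _)).
  have hb : b @ \oo --> z ord0 i.
    have h1 : (fun k => (u k).2) @ \oo --> z.
      exact: (cvg_comp _ _ ucv cvg_snd).
    exact: (cvg_comp _ _ h1 (@coord_continuous R 1 p ord0 i _)).
  have hS k : [/\ 0 <= a k, 0 <= b k & a k * b k = e k ^+ 2].
    exact: (iffLR (psi0 _ _ _ _) (uS k i)).
  split.
  + have := closed_cvg [set t : R | 0 <= t] (@closed_ge R 0) _ _ ha; apply.
    by apply: nearW => k; case: (hS k).
  + have := closed_cvg [set t : R | 0 <= t] (@closed_ge R 0) _ _ hb; apply.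
    by apply: nearW => k; case: (hS k).
  + have h1 : (fun k => a k * b k) @ \oo --> y ord0 i * z ord0 i by apply: cvgM.
    have h2 : (fun k => e k * e k) @ \oo --> (0 * 0 : R) by apply: cvgM.
    have E : (fun k => a k * b k) = (fun k => e k * e k).
      by apply/funext => k; case: (hS k) => _ _ ->; rewrite expr2.
    rewrite E in h1; rewrite mul0r in h2; rewrite expr0n /=.
    exact: (cvg_unique _ h1 h2).
- move=> [y z] H0 e e0 ecv.
  have H (i : 'I_p) := iffLR (psi0 _ _ _ _) (H0 i).
  pose T k := \row_i tfun (y ord0 i + z ord0 i) (e k) : 'rV[R]_p.
  have HT (k : nat) (i : 'I_p) := (let: And3 a0 b0 ab := H i in
     @tfun_prop R _ _ _ a0 b0 (etrans ab (expr0n _ _)) (ltW (e0 k))).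
  exists (fun k => (y + T k, z + T k)); split.
  + apply: nearW => k i /=; rewrite !mxE.
    by case: (HT k i).
  + have T0' : T k @[k --> \oo] --> (0 : 'rV[R]_p).
      apply/norm_cvg0P.
      apply: (@squeeze_cvgr _ _ _ _ (fun=> 0) e); last exact: ecv; first last.
        exact: cvg_cst.
      apply: nearW => k; rewrite normr_ge0 /=.
      have -> : `|T k| = mx_norm (T k) by [].
      rewrite mx_normrE;
 apply: bigmax_le; first exact: ltW.
      move=> [i j] _ /=; rewrite !mxE ord1.
      by case: (HT k j) => t0 te _; rewrite ger0_norm.
    have h1 : (fun k => y + T k) @ \oo --> y.
      rewrite -[X in _ --> X]addr0; apply: cvgD => //; exact: cvg_cst.
    have h2 : (fun k => z + T k) @ \oo --> z.
      rewrite -[X in _ --> X]addr0; apply: cvgD => //; exact: cvg_cst.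
    exact: (cvg_pair h1 h2).
Qed.
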